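(* Let $\mathscr H$ be a reproducing kernel Hilbert space of complex-valued holomorphic functions on $\mathbb D^2$ such that multiplication by $z_1$ and by $z_2$ define bounded operators $\mathscr M_{z_1},\mathscr M_{z_2}$ on $\mathscr H$. If $\mathscr H$ has the division property, then for every $\lambda=(\lambda_1,\lambda_2)\in\mathbb D^2$ the Koszul complex of $\mathscr M_z-\lambda=(\mathscr M_{z_1}-\lambda_1,\mathscr M_{z_2}-\lambda_2)$ is exact at the middle stage; that is, whenever $g,h\in\mathscr H$ satisfy $(\mathscr M_{z_1}-\lambda_1)g+(\mathscr M_{z_2}-\lambda_2)h=0$, there exists $k\in\mathscr H$ with $g=(\mathscr M_{z_2}-\lambda_2)k$ and $h=-(\mathscr M_{z_1}-\lambda_1)k$.
   Context: $\mathbb D$ is the open unit disc. A Hilbert space $\mathscr H$ of holomorphic functions on $\mathbb D^2$ has the division property if for each $j\in\{1,2\}$, whenever $\lambda\in\mathbb D^2$ and $f\in\mathscr H$ vanishes on $\{z\in\mathbb D^2:z_j=\lambda_j\}$, the holomorphic function $f(z)/(z_j-\lambda_j)$ belongs to $\mathscr H$. For a commuting pair $T=(T_1,T_2)$ on $\mathscr H$, the Koszul complex is $0\to\mathscr H\xrightarrow{B_2}\mathscr H\oplus\mathscr H\xrightarrow{B_1}\mathscr H\to0$ with $B_2h=(T_2h,-T_1h)$ and $B_1(h_1,h_2)=T_1h_1+T_2h_2$; exactness at the middle stage means $\ker B_1=\operatorname{ran}B_2$. *)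

(* Defs.v *)
(* Complex numbers are [R[i]] (= complex R from
   mathcomp-real-closed) for [R : realType]; [R[i]^o] is its canonical
   normed-module structure over itself. *)
From HB Require Import structures.
From mathcomp Require Import all_boot all_order all_algebra.
From mathcomp Require Import all_classical all_reals all_analysis.
From mathcomp Require Export complex.
Export numFieldNormedType.Exports.
Import Order.TTheory GRing.Theory Num.Theory.

Set Implicit Arguments.
Unset Strict Implicit.
Unset Printing Implicit Defensive.

Local Open Scope ring_scope.

Section Defs.
Variable R : realType.
Notation C := (R[i]).

Definition bidisc : set (C * C) := fun z => `|z.1| < 1 /\ `|z.2| < 1.

Definition holomorphic_on_bidisc (f : C * C -> C) : Prop :=
  forall z : C * C, bidisc z ->
    differentiable (f : (C^o * C^o)%type -> C^o) (z : (C^o * C^o)%type).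

Definition is_hilbert_inner_product (V : completeNormedModType C)
    (ip : V -> V -> C) : Prop :=
  [/\ forall (a : C) (u v w : V), ip (a *: u + v) w = a * ip u w + ip v w,
      forall u v : V, ip u v = (ip v u)^*,
      forall u : V, 0 <= ip u u,
      forall u : V, ip u u = 0 -> u = 0
    & forall u : V, (`|u| : C) ^+ 2 = ip u u].

(* [ev] realizes the Hilbert space [V] as a reproducing kernel Hilbert space
   of holomorphic functions on D^2: each element is (via [ev]) a holomorphic
   function on D^2, the vector operations are the pointwise ones, distinct
   elements are distinct functions on D^2, and point evaluations at points
   of D^2 are continuous (reproducing kernel property). *)
Definition is_rkhs_holomorphic_bidisc (V : completeNormedModType C)
    (ev : V -> C * C -> C) : Prop :=
  [/\ forall u : V, holomorphic_on_bidisc (ev u),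
      forall (a : C) (u v : V) (z : C * C), bidisc z ->
        ev (a *: u + v) z = a * ev u z + ev v z,
      forall u v : V, (forall z, bidisc z -> ev u z = ev v z) -> u = v
    & forall z : C * C, bidisc z -> continuous (fun u : V => (ev u z : C^o))].

Definition bounded_operator (V : completeNormedModType C) (T : V -> V) : Prop :=
  (forall (a : C) (u v : V), T (a *: u + v) = a *: T u + T v) /\ continuous T.

Definition is_mult_operator (V : completeNormedModType C)
    (ev : V -> C * C -> C) (coord : C * C -> C) (M : V -> V) : Prop :=
  forall (u : V) (z : C * C), bidisc z -> ev (M u) z = coord z * ev u z.

(* Division property: for j in {1,2}, lambda in D^2 and f in H vanishing on
   {z in D^2 : z_j = lambda_j}, the holomorphic function f(z)/(z_j-lambda_j)
   belongs to H, i.e. it is (on D^2) the function of some element k of H.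
   (A holomorphic function on D^2 is determined by its values off the
   hyperplane, so it suffices to prescribe them there.) *)
Definition division_property (V : completeNormedModType C)
    (ev : V -> C * C -> C) : Prop :=
  forall (lam : C * C), bidisc lam -> forall f : V,
    ((forall z, bidisc z -> z.1 = lam.1 -> ev f z = 0) ->
      exists k : V, forall z, bidisc z -> z.1 != lam.1 ->
        ev k z = ev f z / (z.1 - lam.1)) /\
    ((forall z, bidisc z -> z.2 = lam.2 -> ev f z = 0) ->
      exists k : V, forall z, bidisc z -> z.2 != lam.2 ->
        ev k z = ev f z / (z.2 - lam.2)).

(* Exactness at the middle stage of the Koszul complex
   0 -> V --B2--> V (+) V --B1--> V -> 0 of a commuting pair (T1, T2), with
   B2 k = (T2 k, - T1 k) and B1 (g, h) = T1 g + T2 h: ker B1 = ran B2. *)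
Definition koszul_exact_middle (V : completeNormedModType C)
    (T1 T2 : V -> V) : Prop :=
  forall g h : V, T1 g + T2 h = 0 <-> exists k : V, g = T2 k /\ h = - T1 k.

End Defs.

(* Main.v *)
Require Import Defs.
From HB Require Import structures.
From mathcomp Require Import all_boot all_order all_algebra.
From mathcomp Require Import all_classical all_reals all_analysis.
From mathcomp Require Import complex.
Import Order.TTheory GRing.Theory Num.Theory.
Local Open Scope ring_scope.
Local Open Scope classical_set_scope.

Lemma perturb1 (R : realType) (f : R[i] * R[i] -> R[i]) (w : R[i] * R[i]) :
  holomorphic_on_bidisc f -> bidisc w ->
  (forall z, bidisc z -> z.2 = w.2 -> z.1 != w.1 -> f z = 0) -> f w = 0.
Proof.
move=> hol bw H0.
have cf := differentiable_continuous (hol w bw).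
pose phi := fun t : R[i]^o => ((w.1 + t : R[i]^o), (w.2 : R[i]^o)).
have cphi : phi t @[t --> (0:R[i]^o)^'] --> (w : (R[i]^o * R[i]^o)%type).
  rewrite [X in _ --> X](surjective_pairing w).
  have h1 : (w.1 + t : R[i]^o) @[t --> (0:R[i]^o)^'] --> (w.1 : R[i]^o).
    have h := @cvgD _ _ _ ((0:R[i]^o)^') _ (fun _ : R[i]^o => (w.1 : R[i]^o)) (fun t : R[i]^o => t) (w.1 : R[i]^o) (0 : R[i]^o) (cvg_cst _) (@nbhs_dnbhs _ (0:R[i]^o)).
    rewrite addr0 in h; exact: h.
  have h2 : (fun _ : R[i]^o => (w.2 : R[i]^o)) @ (0:R[i]^o)^' --> (w.2 : R[i]^o) by exact: cvg_cst.
  exact: (cvg_pair h1 h2).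
have c1 := @cvg_comp _ _ _ phi f _ _ _ cphi cf.
have c2 : (f \o phi) @ (0:R[i]^o)^' --> (0 : R[i]^o).
apply: (cvg_near_cst (0:R[i]^o)).
  have e0 : (0 : R[i]) < 1 - `|w.1| by rewrite subr_gt0; case: bw.
  near=> t.
  have tn0 : t != 0 by near: t; exact: nbhs_dnbhs_neq.
  have tl : `|t| < 1 - `|w.1| by near: t; exact: dnbhs0_lt.
  rewrite /= H0 //=.
  - split => /=; last by case: bw.
    apply: (le_lt_trans (ler_normD _ _)).
    by rewrite -ltrBrDl.
  - by rewrite -subr_eq0 addrC addKr.
have PF : ProperFilter ((f \o phi) @ (0:R[i]^o)^') by apply: fmap_proper_filter.
exact: (@cvg_unique (R[i]^o) (@norm_hausdorff _ (R[i]^o)) _ PF _ _ c1 c2).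
Unshelve. all: by end_near.
Qed.

Lemma perturb2 (R : realType) (f : R[i] * R[i] -> R[i]) (w : R[i] * R[i]) :
  holomorphic_on_bidisc f -> bidisc w ->
  (forall z, bidisc z -> z.1 = w.1 -> z.2 != w.2 -> f z = 0) -> f w = 0.
Proof.
move=> hol bw H0.
have cf := differentiable_continuous (hol w bw).
pose phi := fun t : R[i]^o => ((w.1 : R[i]^o), (w.2 + t : R[i]^o)).
have cphi : phi t @[t --> (0:R[i]^o)^'] --> (w : (R[i]^o * R[i]^o)%type).
  rewrite [X in _ --> X](surjective_pairing w).
  have h2 : (w.2 + t : R[i]^o) @[t --> (0:R[i]^o)^'] --> (w.2 : R[i]^o).
    have h := @cvgD _ _ _ ((0:R[i]^o)^') _ (fun _ : R[i]^o => (w.2 : R[i]^o)) (fun t : R[i]^o => t) (w.2 : R[i]^o) (0 : R[i]^o) (cvg_cst _) (@nbhs_dnbhs _ (0:R[i]^o)).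
    rewrite addr0 in h; exact: h.
  have h1 : (fun _ : R[i]^o => (w.1 : R[i]^o)) @ (0:R[i]^o)^' --> (w.1 : R[i]^o) by exact: cvg_cst.
  exact: (cvg_pair h1 h2).
have c1 := @cvg_comp _ _ _ phi f _ _ _ cphi cf.
have c2 : (f \o phi) @ (0:R[i]^o)^' --> (0 : R[i]^o).
apply: (cvg_near_cst (0:R[i]^o)).
  have e0 : (0 : R[i]) < 1 - `|w.2| by rewrite subr_gt0; case: bw.
  near=> t.
  have tn0 : t != 0 by near: t; exact: nbhs_dnbhs_neq.
  have tl : `|t| < 1 - `|w.2| by near: t; exact: dnbhs0_lt.
  rewrite /= H0 //=.
  - split => /=; first by case: bw.
    apply: (le_lt_trans (ler_normD _ _)).
    by rewrite -ltrBrDl.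
  - by rewrite -subr_eq0 addrC addKr.
have PF : ProperFilter ((f \o phi) @ (0:R[i]^o)^') by apply: fmap_proper_filter.
exact: (@cvg_unique (R[i]^o) (@norm_hausdorff _ (R[i]^o)) _ PF _ _ c1 c2).
Unshelve. all: by end_near.
Qed.
Theorem lemma4p3 (R : realType) (V : completeNormedModType R[i])
    (ip : V -> V -> R[i]) (ev : V -> R[i] * R[i] -> R[i]) (M1 M2 : V -> V) :
  is_hilbert_inner_product ip ->
  is_rkhs_holomorphic_bidisc ev ->
  is_mult_operator ev (fun z => z.1) M1 -> bounded_operator M1 ->
  is_mult_operator ev (fun z => z.2) M2 -> bounded_operator M2 ->
  division_property ev ->
  forall lam : R[i] * R[i], bidisc lam ->
    koszul_exact_middle (fun u => M1 u - lam.1 *: u) (fun u => M2 u - lam.2 *: u).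
Proof.
move=> _ [Hhol Hlin Hinj _] HM1 _ HM2 _ Hdiv lam Hlam g h.
have ev0 z : bidisc z -> ev 0 z = 0.
  move=> bz; have := Hlin 1 0 0 z bz; rewrite scale1r addr0 mul1r => h0.
  by apply: (addrI (ev 0 z)); rewrite addr0 -h0.
have evZ a u z : bidisc z -> ev (a *: u) z = a * ev u z.
  by move=> bz; have := Hlin a u 0 z bz; rewrite addr0 ev0 // addr0.
have evD u v z : bidisc z -> ev (u + v) z = ev u z + ev v z.
  by move=> bz; have := Hlin 1 u v z bz; rewrite scale1r mul1r.
have evN u z : bidisc z -> ev (- u) z = - ev u z.
  by move=> bz; rewrite -scaleN1r evZ // mulN1r.
have evT1 u z : bidisc z -> ev (M1 u - lam.1 *: u) z = (z.1 - lam.1) * ev u z.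
  by move=> bz; rewrite evD // evN // evZ // HM1 // mulrBl.
have evT2 u z : bidisc z -> ev (M2 u - lam.2 *: u) z = (z.2 - lam.2) * ev u z.
  by move=> bz; rewrite evD // evN // evZ // HM2 // mulrBl.
split; last first.
  move=> [k [-> ->]]; apply: Hinj => z bz.
  rewrite ev0 // evD // !(evT1 _ _ bz, evT2 _ _ bz, evN _ _ bz).
  by rewrite mulrN mulrCA subrr.
move=> Hk0.
have E z : bidisc z -> (z.1 - lam.1) * ev g z + (z.2 - lam.2) * ev h z = 0.
  by move=> bz; rewrite -evT1 // -evT2 // -evD // Hk0 ev0.
have gvan' z : bidisc z -> z.2 = lam.2 -> z.1 != lam.1 -> ev g z = 0.
  move=> bz e2 n1; have := E z bz; rewrite e2 subrr mul0r addr0 => /eqP.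
  by rewrite mulf_eq0 subr_eq0 (negbTE n1) /= => /eqP.
have gvan z : bidisc z -> z.2 = lam.2 -> ev g z = 0.
  move=> bz e2; have [e1|n1] := eqVneq z.1 lam.1; last exact: gvan'.
  apply: (@perturb1 R _ _ (Hhol g) bz).
  by move=> z' bz' e2' n1'; apply: gvan' => //; [rewrite e2' | rewrite -e1].
have [k Hk] := (Hdiv lam Hlam g).2 gvan.
exists k; split.
  apply: Hinj => z bz; rewrite evT2 //.
  have [e2|n2] := eqVneq z.2 lam.2; first by rewrite gvan // e2 subrr mul0r.
  by rewrite Hk // mulrC divfK // subr_eq0.
have van' z : bidisc z -> z.2 != lam.2 -> ev (h + (M1 k - lam.1 *: k)) z = 0.
  move=> bz n2; rewrite evD // evT1 // Hk //.
  have nz : z.2 - lam.2 != 0 by rewrite subr_eq0.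
  rewrite mulrA; have := E z bz; move/eqP; rewrite addr_eq0 => /eqP ->.
  by rewrite mulNr [_ * ev h z]mulrC mulfK // subrr.
have van : h + (M1 k - lam.1 *: k) = 0.
  apply: Hinj => z bz; rewrite ev0 //.
  have [e2|n2] := eqVneq z.2 lam.2; last exact: van'.
  apply: (@perturb2 R _ _ (Hhol _) bz).
  by move=> z' bz' e1' n2'; apply: van' => //; rewrite -e2.
by apply/eqP; rewrite -addr_eq0 van.
Qed.
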